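(* Let $F$ be a field with $\mathrm{char}\,F\neq 2$, let $\lambda\in F$, and let $I_n$ be the $F$-algebra defined in the context. Then $\mathrm{rb}_\lambda(I_n)\le 2$. If $F$ is totally real, then $\mathrm{rb}_\lambda(I_n)=1$. If $F$ is quadratically closed and $n\ge 3$, then $\mathrm{rb}_\lambda(I_n)=2$.
   Context: $I_n$ denotes the $n$-dimensional (non-associative) algebra over $F$ with basis $e_1,\ldots,e_n$ and multiplication given by $e_n\cdot e_n=2e_n$, $e_n\cdot e_j=e_j$, $e_j\cdot e_j=e_n$ for $j=1,\ldots,n-1$, with all other products of basis elements equal to zero (extended bilinearly). A linear operator $R\colon A\to A$ is a Rota--Baxter operator of weight $\lambda\in F$ if $R(x)R(y)=R(R(x)y+xR(y)+\lambda xy)$ for all $x,y\in A$; $\mathrm{RB}_\lambda(A)$ is the set of such operators. The Rota--Baxter $\lambda$-index of $A$ is $\mathrm{rb}_\lambda(A)=\min\{m\in\mathbb{N}\mid \text{for every } R\in\mathrm{RB}_\lambda(A) \text{ there is } k\in\{0,\ldots,m\} \text{ with } R^k(R+\lambda\,\mathrm{id})^{m-k}=0\}$ (and $\infty$ if no such $m$ exists). A field $F$ is totally real if $\nu_1^2+\cdots+\nu_t^2=0$ with $\nu_i\in F$ implies all $\nu_i=0$; it is quadratically closed if every quadratic equation over $F$ has a solution in $F$. *)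

(* Defs.v *)
From HB Require Import structures.
From mathcomp Require Import all_boot all_order all_algebra.
Set Implicit Arguments. Unset Strict Implicit. Unset Printing Implicit Defensive.
Import Order.TTheory GRing.Theory Num.Theory.
Local Open Scope ring_scope.

(* Elements of I_n are row vectors x : 'rV[F]_n, coordinate j : 'I_n is the
   coefficient of e_(j+1); the index with value n.-1 is e_n.
   Linear operators are matrices acting on the right: R(x) := x *m R. *)

(* The multiplication of I_n:
   e_n e_n = 2 e_n, e_n e_j = e_j, e_j e_j = e_n (j < n), other products 0. *)
Definition Imul (F : fieldType) (n : nat) (x y : 'rV[F]_n) : 'rV[F]_n :=
  \row_(k < n)
    (if (k : nat) == n.-1 then
       2 * (x 0 k * y 0 k) + \sum_(j < n | (j : nat) != n.-1) x 0 j * y 0 j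
     else
       \sum_(m < n | (m : nat) == n.-1) x 0 m * y 0 k).

Definition is_RB (F : fieldType) (n : nat) (lam : F) (R : 'M[F]_n) : Prop :=
  forall x y : 'rV[F]_n,
    Imul (x *m R) (y *m R) =
    (Imul (x *m R) y + Imul x (y *m R) + lam *: Imul x y) *m R.

Definition rb_ok (F : fieldType) (n : nat) (lam : F) (m : nat) : Prop :=
  forall R : 'M[F]_n, is_RB lam R ->
    exists2 k : nat, (k <= m)%N & R ^+ k * (R + lam%:M) ^+ (m - k) = 0.

Definition rb_le (F : fieldType) (n : nat) (lam : F) (m : nat) : Prop :=
  exists2 m' : nat, (m' <= m)%N & rb_ok n lam m'.

Definition rb_eq (F : fieldType) (n : nat) (lam : F) (m : nat) : Prop :=
  rb_ok n lam m /\ forall m' : nat, (m' < m)%N -> ~ rb_ok n lam m'.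

Definition totally_real (F : fieldType) : Prop :=
  forall s : seq F, \sum_(v <- s) v ^+ 2 = 0 -> all (fun v => v == 0) s.

Definition quadratically_closed (F : fieldType) : Prop :=
  forall a b c : F, a != 0 -> exists x : F, a * x ^+ 2 + b * x + c = 0.

(* Main.v *)
Require Import Defs.
From mathcomp Require Import all_boot all_order all_algebra.
From mathcomp Require Import ring.
Set Implicit Arguments. Unset Strict Implicit. Unset Printing Implicit Defensive.
Import GRing.Theory.
Local Open Scope ring_scope.

Definition dot (F : fieldType) (n : nat) (x y : 'rV[F]_n) : F :=
  \sum_j x 0 j * y 0 j.

Lemma dotC (F : fieldType) (n : nat) (x y : 'rV[F]_n) : dot x y = dot y x.
Proof. by apply: eq_bigr => j _; rewrite mulrC. Qed.

Lemma dotDl (F : fieldType) (n : nat) (x y z : 'rV[F]_n) :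
  dot (x + y) z = dot x z + dot y z.
Proof. by rewrite /dot -big_split; apply: eq_bigr => j _; rewrite mxE mulrDl. Qed.

Lemma dotZl (F : fieldType) (n : nat) (a : F) (x y : 'rV[F]_n) :
  dot (a *: x) y = a * dot x y.
Proof. by rewrite /dot big_distrr; apply: eq_bigr => j _; rewrite mxE -mulrA. Qed.

Lemma dotDr (F : fieldType) (n : nat) (x y z : 'rV[F]_n) :
  dot z (x + y) = dot z x + dot z y.
Proof. by rewrite dotC dotDl !(dotC z). Qed.

Lemma dotZr (F : fieldType) (n : nat) (a : F) (x y : 'rV[F]_n) :
  dot y (a *: x) = a * dot y x.
Proof. by rewrite dotC dotZl dotC. Qed.

Lemma dot_delta (F : fieldType) (n : nat) (a : 'I_n) (y : 'rV[F]_n) :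
  dot (delta_mx 0 a) y = y 0 a.
Proof.
rewrite /dot (bigD1 a) //= big1 ?addr0; first by rewrite mxE !eqxx mul1r.
by move=> j /negbTE ja; rewrite mxE ja andbF mul0r.
Qed.

Lemma entD (F : fieldType) (n : nat) (A B : 'rV[F]_n) j : (A + B) 0 j = A 0 j + B 0 j.
Proof. by rewrite mxE. Qed.
Lemma entB (F : fieldType) (n : nat) (A B : 'rV[F]_n) j : (A - B) 0 j = A 0 j - B 0 j.
Proof. by rewrite !mxE. Qed.
Lemma entZ (F : fieldType) (n : nat) (a : F) (A : 'rV[F]_n) j : (a *: A) 0 j = a * A 0 j.
Proof. by rewrite mxE. Qed.
Lemma ent0 (F : fieldType) (n : nat) j : (0 : 'rV[F]_n) 0 j = 0.
Proof. by rewrite mxE. Qed.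
Lemma ent_delta (F : fieldType) (n : nat) (a j : 'I_n) :
  (delta_mx 0 a : 'rV[F]_n) 0 j = (j == a)%:R.
Proof. by rewrite mxE eqxx. Qed.

Definition ee (F : fieldType) (n : nat) : 'rV[F]_n.+1 := delta_mx 0 ord_max.

Lemma Imul_eq (F : fieldType) (n : nat) (x y : 'rV[F]_n.+1) :
  Imul x y = x 0 ord_max *: y + dot x y *: ee F n.
Proof.
apply/rowP => k; rewrite !mxE /=.
case: eqP => [kn|kn].
  have -> : k = ord_max by apply: val_inj.
  rewrite eqxx mulr1 /dot [in RHS](bigD1 ord_max) //=.
  have -> : \sum_(j < n.+1 | (j : nat) != n) x 0 j * y 0 j
          = \sum_(i < n.+1 | i != ord_max) x 0 i * y 0 i.
    by apply: eq_bigl => j.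
  by rewrite mulr2n mulrDl mul1r addrA.
have -> : (k == ord_max) = false by apply/eqP => /(congr1 val) /=.
by rewrite mulr0 addr0 (big_pred1 ord_max).
Qed.

Lemma from_eq (F : fieldType) (A B C D : F) : A = B -> C - D = B - A -> C = D.
Proof. by move=> -> h; apply/eqP; rewrite -subr_eq0 h subrr. Qed.

Lemma from_eq' (F : fieldType) (A B C D : F) : A = B -> C - D = A - B -> C = D.
Proof. by move=> -> h; apply/eqP; rewrite -subr_eq0 h subrr. Qed.

Lemma star_aux (F : fieldType) (n : nat) (a b c d g l xn : F)
  (yR yRR e eR : 'rV[F]_n) :
  (a *: yR + b *: e = a *: yR + c *: eR + (xn *: yRR + d *: eR) + l *: (xn *: yR + g *: eR))
  <-> (xn *: (yRR + l *: yR) = b *: e - (c + d + l * g) *: eR).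
Proof.
split=> H; apply/rowP => k; move/rowP/(_ k): H; rewrite !mxE => H.
  by apply: (from_eq H); ring.
by apply: (from_eq H); ring.
Qed.

Definition PP (F : fieldType) (n : nat) (lam : F) (R : 'M[F]_n) (y : 'rV[F]_n) :=
  y *m R *m R + lam *: (y *m R).
Definition SS (F : fieldType) (n : nat) (lam : F) (R : 'M[F]_n) (x y : 'rV[F]_n) :=
  dot (x *m R) y + dot x (y *m R) + lam * dot x y.

Lemma RB_star (F : fieldType) (n : nat) (lam : F) (R : 'M[F]_n.+1) :
  is_RB lam R <-> forall x y : 'rV[F]_n.+1, x 0 ord_max *: PP lam R y =
     dot (x *m R) (y *m R) *: ee F n - SS lam R x y *: (ee F n *m R).
Proof.
have E : forall x y : 'rV[F]_n.+1, (Imul (x *m R) (y *m R) =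
    (Imul (x *m R) y + Imul x (y *m R) + lam *: Imul x y) *m R) <->
   (x 0 ord_max *: PP lam R y =
     dot (x *m R) (y *m R) *: ee F n - SS lam R x y *: (ee F n *m R)).
  move=> x y; rewrite !Imul_eq !mulmxDl -!scalemxAl !mulmxDl -!scalemxAl.
  exact: star_aux.
by split=> H x y; apply/E.
Qed.

Lemma ee_m (F : fieldType) (n : nat) : ee F n 0 ord_max = 1.
Proof. by rewrite /ee ent_delta eqxx. Qed.

Lemma ee_j (F : fieldType) (n : nat) (j : 'I_n.+1) : j != ord_max -> ee F n 0 j = 0.
Proof. by move=> /negbTE h; rewrite /ee ent_delta h. Qed.

Lemma ee_neq0 (F : fieldType) (n : nat) : ee F n != 0.
Proof. by apply/eqP => /rowP/(_ ord_max); rewrite ee_m mxE; apply/eqP; exact: oner_neq0. Qed.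

Lemma SS_sym (F : fieldType) (n : nat) (lam : F) (R : 'M[F]_n) x y :
  SS lam R x y = SS lam R y x.
Proof. by rewrite /SS (dotC (x *m R)) (dotC x (y *m R)) (dotC x y) [dot y _ + _]addrC. Qed.

Lemma PP_R (F : fieldType) (n : nat) (lam : F) (R : 'M[F]_n) x :
  PP lam R (x *m R) = PP lam R x *m R.
Proof. by rewrite /PP mulmxDl -scalemxAl. Qed.

Lemma PP_sym (F : fieldType) (n : nat) (lam : F) (R : 'M[F]_n.+1) :
  is_RB lam R -> forall y, PP lam R y = y 0 ord_max *: PP lam R (ee F n).
Proof.
move=> /RB_star H y.
have h1 := H (ee F n) y; have h2 := H y (ee F n).
rewrite ee_m scale1r in h1.
by rewrite h1 h2 dotC SS_sym.
Qed.

Lemma PP0 (F : fieldType) (n : nat) (lam : F) (R : 'M[F]_n.+1) :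
  is_RB lam R -> (2 : F) != 0 -> forall y, PP lam R y = 0.
Proof.
move=> HR two y; have H := (iffLR (RB_star lam R)) HR.
rewrite (PP_sym HR y).
set e := ee F n; set f := PP lam R e.
suff -> : f = 0 by rewrite scaler0.
set c := (e *m R) 0 ord_max.
have key : (forall j, j != ord_max -> (e *m R) 0 j = 0) -> f = 0.
  move=> hj.
  have eRc : e *m R = c *: e.
    apply/rowP => j; rewrite entZ; case: (eqVneq j ord_max) => [->|jm].
      by rewrite ee_m mulr1.
    by rewrite hj // ee_j // mulr0.
  have h1 := H e e; rewrite ee_m scale1r -/f in h1.
  have h2 : f = (c ^+ 2 + lam * c) *: e.
    by rewrite /f /PP eRc -scalemxAl eRc scalerA scalerA -scalerDl mulrC.
  have dee : dot e e = 1 by rewrite /e /ee dot_delta -/(ee F n) ee_m.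
  rewrite /SS eRc !dotZl !dotZr dee in h1.
  have h3 : ((c ^+ 2 + lam * c) - (c * (c * 1) - (c * 1 + c * 1 + lam * 1) * c)) *: e = 0.
    by rewrite scalerBl -h2 {1}h1 -/e scalerA -scalerBl subrr.
  move/eqP: h3; rewrite scaler_eq0 (negbTE (ee_neq0 F n)) orbF => /eqP h3.
  have h4 : (c ^+ 2 + lam * c) * 2 = 0 by rewrite -h3; ring.
  move/eqP: h4; rewrite mulf_eq0 (negbTE two) orbF => /eqP h4.
  by rewrite h2 h4 scale0r.
case: (eqVneq f 0) => // fn0; apply: key => j jm.
set x : 'rV[F]_n.+1 := delta_mx 0 j.
have xm : x 0 ord_max = 0 by rewrite /x ent_delta eq_sym (negbTE jm).
have h3 : (x *m R) 0 ord_max = 0.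
  have := PP_sym HR (x *m R); rewrite PP_R (PP_sym HR x) xm scale0r mul0mx -/e -/f.
  by move/esym/eqP; rewrite scaler_eq0 (negbTE fn0) orbF => /eqP.
have h4 := H x e; rewrite xm scale0r in h4.
move/rowP/(_ j): h4; rewrite ent0 entB !entZ ee_j // mulr0 sub0r.
rewrite /SS dotC /e /ee dot_delta -/(ee F n) -/e h3 /x dot_delta dot_delta ee_j // mulr0 addr0 add0r.
by move/esym/eqP; rewrite oppr_eq0 mulf_eq0 orbb => /eqP.
Qed.

Lemma mat_eq0 (F : fieldType) (n : nat) (A : 'M[F]_n) :
  (forall y : 'rV[F]_n, y *m A = 0) -> A = 0.
Proof.
move=> h; apply/matrixP => i j.
by have := congr1 (fun M : 'rV[F]_n => M 0 j) (h (delta_mx 0 i)); rewrite -rowE !mxE.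
Qed.

Lemma PP_mx (F : fieldType) (n : nat) (lam : F) (R : 'M[F]_n) y :
  PP lam R y = y *m (R * (R + lam%:M)).
Proof. by rewrite /PP -mulmxE mulmxA mulmxDr mul_mx_scalar. Qed.

Lemma RB_quad (F : fieldType) (n : nat) (lam : F) (R : 'M[F]_n.+1) :
  is_RB lam R -> (2 : F) != 0 -> R * (R + lam%:M) = 0.
Proof. by move=> HR two; apply: mat_eq0 => y; rewrite -PP_mx PP0. Qed.

Lemma dot0l (F : fieldType) (n : nat) (y : 'rV[F]_n) : dot 0 y = 0.
Proof. by rewrite /dot big1 // => j _; rewrite mxE mul0r. Qed.

Lemma RB0 (F : fieldType) (n : nat) (lam : F) : is_RB lam (0 : 'M[F]_n.+1).
Proof. by move=> x y; rewrite !mulmx0 Imul_eq dot0l !scaler0 scale0r addr0. Qed.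

Lemma not_ok0 (F : fieldType) (n : nat) (lam : F) : ~ rb_ok n.+1 lam 0.
Proof.
move=> /(_ 0 (RB0 lam)) [k]; rewrite leqn0 => /eqP -> /=.
by rewrite !expr0 mulr1; apply/eqP; exact: oner_neq0.
Qed.

Lemma ok2 (F : fieldType) (n : nat) (lam : F) : (2 : F) != 0 -> rb_ok n.+1 lam 2.
Proof. by move=> two R HR; exists 1%N => //=; rewrite !expr1 RB_quad. Qed.

Lemma tr_dot (F : fieldType) (n : nat) (z : 'rV[F]_n) :
  totally_real F -> dot z z = 0 -> z = 0.
Proof.
move=> TR hz; have := TR [seq z 0 j | j <- index_enum 'I_n].
rewrite big_map => /(_ _)/allP.
have -> : \sum_(j <- index_enum 'I_n) z 0 j ^+ 2 = dot z z.
  by apply: eq_bigr => j _; rewrite expr2.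
move=> /(_ hz) h; apply/rowP => j; rewrite mxE.
by apply/eqP; apply: (h (z 0 j)); apply: map_f; rewrite mem_index_enum.
Qed.

Lemma RB_tr (F : fieldType) (n : nat) (lam : F) (R : 'M[F]_n.+1) :
  is_RB lam R -> (2 : F) != 0 -> totally_real F -> R = 0 \/ R + lam%:M = 0.
Proof.
move=> HR two TR; have H := (iffLR (RB_star lam R)) HR.
have H0 : forall x : 'rV[F]_n.+1,
    dot (x *m R) (x *m R) *: ee F n - SS lam R x x *: (ee F n *m R) = 0.
  by move=> x; rewrite -H PP0 // scaler0.
set e := ee F n.
case: (pickP (fun j => (j != ord_max) && ((e *m R) 0 j != 0))) => [j /andP[jm ej] | none].
  left; apply: mat_eq0 => x; apply: tr_dot => //.
  have := H0 x; move/rowP => h.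
  have hj := h j; have hm := h ord_max.
  rewrite ent0 entB !entZ ee_j // mulr0 sub0r in hj.
  move/eqP: hj; rewrite oppr_eq0 mulf_eq0 (negbTE ej) orbF => /eqP hS.
  by move: hm; rewrite ent0 entB !entZ ee_m mulr1 -/e hS mul0r subr0.
have eRj : forall j, j != ord_max -> (e *m R) 0 j = 0.
  by move=> j jm; have := none j; rewrite jm /= => /negbFE/eqP.
set c := (e *m R) 0 ord_max.
have eRc : e *m R = c *: e.
  apply/rowP => j; rewrite entZ; case: (eqVneq j ord_max) => [->|jm].
    by rewrite ee_m mulr1.
  by rewrite eRj // ee_j // mulr0.
have hc : c * (c + lam) = 0.
  have := PP0 HR two e; rewrite /PP eRc -scalemxAl eRc !scalerA -scalerDl.
  move/eqP; rewrite scaler_eq0 (negbTE (ee_neq0 F n)) orbF => /eqP <-.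
  by ring.
have hm : forall x : 'rV[F]_n.+1, dot (x *m R) (x *m R) = SS lam R x x * c.
  move=> x; have := H0 x; move/rowP/(_ ord_max).
  rewrite ent0 entB !entZ ee_m mulr1 -/e -/c => /eqP; rewrite subr_eq0 => /eqP.
  done.
move/eqP: hc; rewrite mulf_eq0 => /orP[/eqP c0 | /eqP cl].
  left; apply: mat_eq0 => x; apply: tr_dot => //.
  by rewrite hm c0 mulr0.
right; apply: mat_eq0 => x; rewrite mulmxDr mul_mx_scalar; apply: tr_dot => //.
have cE : c = - lam by apply/eqP; rewrite -addr_eq0; apply/eqP.
rewrite !dotDl !dotDr !dotZl !dotZr hm cE /SS (dotC x (x *m R)).
by ring.
Qed.

Lemma dot_deltar (F : fieldType) (n : nat) (a : 'I_n) (y : 'rV[F]_n) :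
  dot y (delta_mx 0 a) = y 0 a.
Proof. by rewrite dotC dot_delta. Qed.

Lemma counter (F : fieldType) (n : nat) (lam : F) :
  quadratically_closed F ->
  exists R : 'M[F]_n.+3, [/\ is_RB lam R, R != 0 & R + lam%:M != 0].
Proof.
move=> QC; have [i hi] := QC 1 0 1 (oner_neq0 F).
have i2 : i * i = -1.
  by apply/eqP; rewrite -subr_eq0 opprK; apply/eqP; rewrite -hi; ring.
pose i0 : 'I_n.+3 := ord0.
pose i1 : 'I_n.+3 := Ordinal (isT : (1 < n.+3)%N).
pose d0 : 'rV[F]_n.+3 := delta_mx 0 i0.
pose d1 : 'rV[F]_n.+3 := delta_mx 0 i1.
pose u := d0 + i *: d1.
pose w := (1 - lam) *: d0 + i *: d1.
pose R : 'M[F]_n.+3 := \matrix_(a, b) (w 0 a * u 0 b).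
have xR : forall x, x *m R = dot x w *: u.
  move=> x; apply/rowP => b; rewrite [LHS]mxE entZ /dot big_distrl /=.
  by apply: eq_bigr => a _; rewrite [R a b]mxE mulrA.
have uu : dot u u = 0.
  rewrite /u !dotDl !dotDr !dotZl !dotZr /d0 /d1 !dot_delta !ent_delta /=.
  by apply: (from_eq' i2); ring.
have uw : dot u w = - lam.
  rewrite /u /w !dotDl !dotDr !dotZl !dotZr /d0 /d1 !dot_delta !ent_delta /=.
  by apply: (from_eq' i2); ring.
have ew : dot (ee F n.+2) w = 0.
  rewrite /ee dot_delta /w entD !entZ /d0 /d1 !ent_delta /=.
  by ring.
exists R; split.
- apply/RB_star => x y.
  rewrite /PP /SS !xR !dotZl !dotZr uu ew uw !scalerA -scalerDl.
  rewrite !mulr0 !scale0r subr0 (_ : _ + _ = 0) ?scale0r ?scaler0 //; ring.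
- apply/eqP => /matrixP/(_ i1 i0); rewrite !mxE /= => h.
  have i0' : i = 0 by rewrite -h; ring.
  by move: i2; rewrite i0' mul0r => /eqP; rewrite eq_sym oppr_eq0 oner_eq0.
- apply/eqP => /matrixP/(_ i0 i0); rewrite !mxE /= => h.
  have : (1 : F) = 0 by rewrite -h; ring.
  by move/eqP; rewrite oner_eq0.
Qed.

Theorem corollary3 (F : fieldType) (n : nat) (lam : F) :
  (0 < n)%N -> (2 : F) != 0 ->
  [/\ rb_le n lam 2,
      totally_real F -> rb_eq n lam 1
    & quadratically_closed F -> (3 <= n)%N -> rb_eq n lam 2].
Proof.
move=> n0 two; case: n n0 => [//|n] _.
split.
- by exists 2%N => //; exact: ok2.
- move=> TR; split.
    move=> R HR; case: (RB_tr HR two TR) => h.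
      by exists 1%N => //=; rewrite expr1 expr0 mulr1 h.
    by exists 0%N => //=; rewrite expr1 expr0 mul1r h.
  by move=> m'; rewrite ltnS leqn0 => /eqP ->; exact: not_ok0.
- move=> QC; case: n => [|[|n]] //= _.
  split; first exact: ok2.
  case=> [_|[_|//]]; first exact: not_ok0.
  move=> ok1; have [R [HR R0 RL]] := counter n lam QC.
  have [k] := ok1 R HR.
  case: k => [_|[_|//]] /=.
    by rewrite expr0 mul1r expr1 => h; rewrite h eqxx in RL.
  by rewrite expr0 mulr1 expr1 => h; rewrite h eqxx in R0.
Qed.
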